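(* Let $\alpha=(\alpha_n)_{n\in\mathbb{N}}\in\ell^2$ and let $J_0=\sup_{m\ge0}(m+1)^{1/2}\big(\sum_{k=m}^\infty|\alpha_k|^2\big)^{1/2}$. The Rhaly operator $R_\alpha$ is bounded on $\ell^2$ if and only if $J_0<\infty$, and in this case $J_0\le\|R_\alpha\|\le2\sqrt2\,J_0$.
   Context: $\mathbb{N}=\{0,1,2,\dots\}$; $\ell^2$ is the space of square-summable functions $\mathbb{N}\to\mathbb{C}$. The Rhaly operator is $(R_\alpha f)(k)=\alpha_k\sum_{j=0}^k f(j)$, and $\|R_\alpha\|=\sup_{\|f\|_2=1}\|R_\alpha f\|_2$. *)

(* Defs.v *)
From Stdlib Require Import Reals.
From Coquelicot Require Export Coquelicot.
Open Scope R_scope.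

Definition in_l2 (f : nat -> C) : Prop :=
  ex_series (fun n => (Cmod (f n)) ^ 2).

(* the l^2 norm (meaningful for f in l^2) *)
Definition l2norm (f : nat -> C) : R :=
  sqrt (Series (fun n => (Cmod (f n)) ^ 2)).

Fixpoint psum (f : nat -> C) (k : nat) : C :=
  match k with
  | O => f O
  | S k' => Cplus (psum f k') (f (S k'))
  end.

Definition rhaly (alpha f : nat -> C) : nat -> C :=
  fun k => Cmult (alpha k) (psum f k).

Definition rhaly_bounded (alpha : nat -> C) : Prop :=
  exists M : R, forall f, in_l2 f ->
    in_l2 (rhaly alpha f) /\ l2norm (rhaly alpha f) <= M * l2norm f.

Definition rhaly_norm (alpha : nat -> C) : Rbar :=
  Lub_Rbar (fun x => exists f, in_l2 f /\ l2norm f = 1 /\ x = l2norm (rhaly alpha f)).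

Definition J0 (alpha : nat -> C) : Rbar :=
  Lub_Rbar (fun x => exists m : nat,
    x = sqrt (INR (m + 1)) * sqrt (Series (fun n => (Cmod (alpha (n + m)%nat)) ^ 2))).

(* Main.v *)
Require Import Defs.
From Stdlib Require Import Reals Lra Lia.
From Coquelicot Require Import Coquelicot.
Open Scope R_scope.

Fixpoint sm (a : nat -> R) (n : nat) : R :=
  match n with O => a O | S n' => sm a n' + a (S n') end.

Lemma sum_n_sm a n : sum_n a n = sm a n.
Proof. induction n; simpl. now rewrite sum_O. rewrite sum_Sn, IHn. reflexivity. Qed.

Lemma sm_ext a b n : (forall k, (k <= n)%nat -> a k = b k) -> sm a n = sm b n.
Proof. induction n; intros H; simpl. apply H; lia. rewrite IHn, H; auto. Qed.

Lemma sm_le a b n : (forall k, (k <= n)%nat -> a k <= b k) -> sm a n <= sm b n.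
Proof. induction n; intros H; simpl. apply H; lia. apply Rplus_le_compat; auto. Qed.

Lemma sm_plus a b n : sm (fun k => a k + b k) n = sm a n + sm b n.
Proof. induction n; simpl; auto. rewrite IHn; ring. Qed.

Lemma sm_scal c a n : sm (fun k => c * a k) n = c * sm a n.
Proof. induction n; simpl; auto. rewrite IHn; ring. Qed.

Lemma sm_nonneg a n : (forall k, 0 <= a k) -> 0 <= sm a n.
Proof. intros H; induction n; simpl; auto. specialize (H (S n)); lra. Qed.

Lemma sm_incr a n : (forall k, 0 <= a k) -> sm a n <= sm a (S n).
Proof. intros H; simpl. specialize (H (S n)); lra. Qed.

Lemma sm_shift a m d : (forall k, 0 <= a k) -> sm (fun n => a (n + m)%nat) d <= sm a (d + m).
Proof.
  intros H; induction d; simpl.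
  - destruct m; simpl. lra. pose proof (sm_nonneg a m H). lra.
  - apply Rplus_le_compat; auto. right; f_equal.
Qed.

Lemma U1 a M : (forall n, 0 <= a n) -> (forall N, sm a N <= M) ->
  ex_series a /\ Series a <= M.
Proof.
  intros Ha HM.
  assert (E : ex_finite_lim_seq (sum_n a)).
  { apply ex_finite_lim_seq_incr with M; intros n; rewrite !sum_n_sm; auto.
    now apply sm_incr. }
  destruct E as [l Hl]. split. exists l. exact Hl.
  unfold Series. rewrite (is_lim_seq_unique _ _ Hl).
  assert (Rbar_le (Lim_seq (sum_n a)) (Lim_seq (fun _ => M))).
  { apply Lim_seq_le_loc. exists O. intros; rewrite sum_n_sm; auto. }
  rewrite (is_lim_seq_unique _ _ Hl), Lim_seq_const in H. exact H.
Qed.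

Lemma U2 a N : (forall n, 0 <= a n) -> ex_series a -> sm a N <= Series a.
Proof.
  intros Ha [l Hl]. rewrite (is_series_unique _ _ Hl), <- sum_n_sm.
  apply (is_lim_seq_incr_compare (sum_n a) l Hl). intros n; rewrite !sum_n_sm; now apply sm_incr.
Qed.

Lemma Series_nonneg a : (forall n, 0 <= a n) -> ex_series a -> 0 <= Series a.
Proof. intros H E. pose proof (U2 a O H E). simpl in H0. specialize (H O). lra. Qed.

Lemma shift_series a m : (forall n, 0 <= a n) -> ex_series a ->
  ex_series (fun n => a (n + m)%nat) /\ Series (fun n => a (n + m)%nat) <= Series a.
Proof.
  intros H E. apply U1. intros; apply H. intros N.
  eapply Rle_trans. apply sm_shift; auto. apply U2; auto.
Qed.

Fixpoint tsum (g : nat -> R) (j d : nat) : R :=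
  match d with O => 0 | S d' => g j + tsum g (S j) d' end.

Lemma tsum_Sr g d : forall j, tsum g j (S d) = tsum g j d + g (j + d)%nat.
Proof.
  induction d; intros j; simpl. rewrite Nat.add_0_r; ring.
  simpl in IHd. rewrite IHd. replace (S j + d)%nat with (j + S d)%nat by lia. ring.
Qed.

Lemma tsum_sm g j d : tsum g j (S d) = sm (fun n => g (n + j)%nat) d.
Proof.
  induction d. simpl. ring.
  rewrite tsum_Sr, IHd. simpl. f_equal. f_equal. lia.
Qed.

Lemma amgm X Y Z : 0 <= X -> 0 <= Y -> X*Y >= Z ^ 2 -> 2 * Z <= X+Y.
Proof. intros. destruct (Rle_or_lt (2*Z) (X+Y)). auto.
assert (4*Z^2 > (X+Y)^2). nra. pose proof (pow2_ge_0 (X-Y)). nra. Qed.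

Lemma wcs a c k : (forall j, 0 < c j) ->
  (sm a k)^2 <= sm (fun j => a j ^ 2 / c j) k * sm c k.
Proof.
  intros Hc. induction k; cbn [sm].
  - specialize (Hc O). replace (a O ^ 2 / c O * c O) with (a O ^ 2) by (field; lra). lra.
  - set (A := sm a k) in *. set (Q := sm (fun j => a j ^ 2 / c j) k) in *.
    set (C := sm c k) in *. set (x := a (S k)). set (y := c (S k)).
    assert (Hy : 0 < y) by apply Hc.
    assert (HC : 0 < C) by (unfold C; clear -Hc; induction k; simpl; auto; specialize (Hc (S k)); lra).
    assert (HQ : 0 <= Q).
    { unfold Q. apply sm_nonneg. intros j. specialize (Hc j). apply Rmult_le_pos. nra. left; now apply Rinv_0_lt_compat. }
    set (q := x ^ 2 / y).
    assert (Hq : q * y = x ^ 2) by (unfold q; field; lra).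
    assert (Hq0 : 0 <= q) by (unfold q; apply Rmult_le_pos; [nra| left; now apply Rinv_0_lt_compat]).
    assert (HX : (Q * y) * (q * C) >= (A * x) ^ 2).
    { replace ((Q * y) * (q * C)) with ((Q * C) * (q * y)) by ring. rewrite Hq. nra. }
    assert (0 <= Q * y) by nra. assert (0 <= q * C) by nra.
    assert (2 * (A * x) <= Q * y + q * C) by (apply amgm; auto).
    replace ((A + x)^2) with (A^2 + 2*(A*x) + x^2) by ring.
    replace ((Q + q) * (C + y)) with (Q*C + Q*y + q*C + q*y) by ring. lra.
Qed.

Lemma sqrt_sum k : sm (fun j => / sqrt (INR (j + 1))) k <= 2 * sqrt (INR (k + 1)).
Proof.
  induction k; cbn [sm].
  - simpl. replace (INR 1) with 1 by (simpl; ring). rewrite sqrt_1. lra.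
  - set (x := sqrt (INR (k + 1))) in *. set (y := sqrt (INR (S k + 1))).
    assert (Hx2 : x * x = INR (k+1)) by (apply sqrt_sqrt; apply pos_INR).
    assert (Hy2 : y * y = INR (k+1) + 1).
    { unfold y. rewrite sqrt_sqrt by apply pos_INR. rewrite !plus_INR, S_INR. ring. }
    assert (Hx : 0 < x) by (apply sqrt_lt_R0; rewrite plus_INR; simpl; pose proof (pos_INR k); lra).
    assert (Hy : 0 < y) by (apply sqrt_lt_R0; rewrite plus_INR, S_INR; simpl; pose proof (pos_INR k); lra).
    assert (/ y <= 2 * (y - x)).
    { apply (Rmult_le_reg_r y); auto. rewrite Rinv_l by lra. pose proof (pow2_ge_0 (y - x)). nra. }
    lra.
Qed.

Lemma tail_bound w B : (forall k, 0 <= w k) ->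
  (forall m d, INR (m + 1) * tsum w m d <= B) ->
  forall d j, tsum (fun k => w k * sqrt (INR (k + 1))) j d <= 2 * B / sqrt (INR (j + 1)).
Proof.
  intros Hw HB.
  assert (B0 : 0 <= B) by (specialize (HB O O); simpl in HB; lra).
  assert (Tpos : forall j d, 0 <= tsum w j d).
  { intros j d; revert j; induction d; intros j; simpl. lra. specialize (Hw j); specialize (IHd (S j)); lra. }
  assert (Claim : forall d j, tsum (fun k => w k * sqrt (INR (k + 1))) j d <=
      tsum w j d * sqrt (INR (j + 1)) + B / sqrt (INR (j + 1))).
  { induction d; intros j; cbn [tsum].
    - rewrite Rmult_0_l, Rplus_0_l. apply Rmult_le_pos; auto. left; apply Rinv_0_lt_compat, sqrt_lt_R0.
      rewrite plus_INR; simpl; pose proof (pos_INR j); lra.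
    - specialize (IHd (S j)). set (x := sqrt (INR (j + 1))) in *. set (y := sqrt (INR (S j + 1))) in *.
      set (T := tsum w (S j) d) in *.
      assert (Hx2 : x * x = INR (j+1)) by (apply sqrt_sqrt; apply pos_INR).
      assert (Hy2 : y * y = INR (j+1) + 1).
      { unfold y. rewrite sqrt_sqrt by apply pos_INR. rewrite !plus_INR, S_INR. ring. }
      assert (Hx : 0 < x) by (apply sqrt_lt_R0; rewrite plus_INR; simpl; pose proof (pos_INR j); lra).
      assert (Hy : 0 < y) by (apply sqrt_lt_R0; rewrite plus_INR, S_INR; simpl; pose proof (pos_INR j); lra).
      assert (HT : (y * y) * T <= B).
      { rewrite Hy2. specialize (HB (S j) d). fold T in HB. replace (S j + 1)%nat with (S (j+1)) in HB by lia. rewrite S_INR in HB. lra. }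
      assert (T0 : 0 <= T) by apply Tpos.
      assert (Hxy : x < y) by nra.
      assert (key : T * y + B / y <= T * x + B / x).
      { assert (T * x * y <= B) by nra.
        apply (Rmult_le_reg_r (x * y)). nra.
        replace ((T * y + B / y) * (x * y)) with (T * x * y * y + B * x) by (field; lra).
        replace ((T * x + B / x) * (x * y)) with (T * x * x * y + B * y) by (field; lra).
        nra. }
      lra. }
  intros d j. eapply Rle_trans. apply Claim.
  set (x := sqrt (INR (j + 1))).
  assert (Hx2 : x * x = INR (j+1)) by (apply sqrt_sqrt; apply pos_INR).
  assert (Hx : 0 < x) by (apply sqrt_lt_R0; rewrite plus_INR; simpl; pose proof (pos_INR j); lra).
  assert (INR (j+1) * tsum w j d <= B) by apply HB.
  assert (tsum w j d * x <= B / x).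
  { apply (Rmult_le_reg_r x); auto. replace (B / x * x) with B by (field; lra). nra. }
  unfold Rdiv in *. lra.
Qed.

Lemma exchange c u N :
  sm (fun k => c k * sm u k) N = sm (fun j => u j * tsum c j (S N - j)) N.
Proof.
  induction N.
  - simpl. ring.
  - cbn [sm]. rewrite IHN.
    replace (S (S N) - S N)%nat with 1%nat by lia.
    rewrite (sm_ext (fun j => u j * tsum c j (S (S N) - j))
                    (fun j => u j * tsum c j (S N - j) + c (S N) * u j)).
    2:{ intros k Hk. replace (S (S N) - k)%nat with (S (S N - k)) by lia.
        rewrite tsum_Sr. replace (k + (S N - k))%nat with (S N) by lia. ring. }
    rewrite sm_plus, sm_scal. cbn [tsum]. ring.
Qed.

Lemma s_pos k : 0 < sqrt (INR (k + 1)).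
Proof. apply sqrt_lt_R0; rewrite plus_INR; simpl; pose proof (pos_INR k); lra. Qed.

Lemma finite_hardy w a B : (forall k, 0 <= w k) -> (forall k, 0 <= a k) ->
  (forall m d, INR (m + 1) * tsum w m d <= B) ->
  forall N, sm (fun k => w k * (sm a k)^2) N <= 4 * B * sm (fun j => a j ^ 2) N.
Proof.
  intros Hw Ha HB N.
  set (s := fun k => sqrt (INR (k + 1))).
  assert (Hs : forall k, 0 < s k) by (intros; apply s_pos).
  set (u := fun j => a j ^ 2 * s j).
  assert (Hu : forall j, 0 <= u j) by (intros j; unfold u; specialize (Hs j); specialize (Ha j); apply Rmult_le_pos; nra).
  assert (step1 : forall k, (sm a k)^2 <= 2 * s k * sm u k).
  { intros k. eapply Rle_trans. apply (wcs a (fun j => / s j)). intros; now apply Rinv_0_lt_compat.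
    rewrite (sm_ext (fun j => a j ^ 2 / / s j) u).
    2:{ intros j _. unfold u, Rdiv. rewrite Rinv_inv. ring. }
    rewrite Rmult_comm. apply Rmult_le_compat_r. apply sm_nonneg; auto. apply sqrt_sum. }
  set (c := fun k => w k * s k).
  eapply Rle_trans.
  { apply (sm_le _ (fun k => 2 * (c k * sm u k))). intros k _.
    specialize (step1 k). specialize (Hw k). unfold c.
    replace (2 * (w k * s k * sm u k)) with (w k * (2 * s k * sm u k)) by ring.
    apply Rmult_le_compat_l; auto. }
  rewrite sm_scal, exchange.
  assert (Hb : sm (fun j => u j * tsum c j (S N - j)) N <= sm (fun j => 2 * B * a j ^ 2) N).
  { apply sm_le. intros j _.
    pose proof (tail_bound w B Hw HB (S N - j) j) as T. fold s c in T.
    specialize (Hs j).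
    replace (2 * B * a j ^ 2) with (u j * (2 * B / s j)) by (unfold u; field; lra).
    apply Rmult_le_compat_l; auto. }
  rewrite sm_scal in Hb. lra.
Qed.

Definition w (alpha : nat -> C) k := Cmod (alpha k) ^ 2.
Definition Tm (alpha : nat -> C) m := Series (fun n => Cmod (alpha (n + m)%nat) ^ 2).

Lemma psum_bound f k : Cmod (psum f k) <= sm (fun j => Cmod (f j)) k.
Proof.
  induction k; simpl. lra. eapply Rle_trans. apply Cmod_triangle. lra.
Qed.

Lemma upper alpha (Ha : in_l2 alpha) J
  (HJ : forall m, sqrt (INR (m + 1)) * sqrt (Tm alpha m) <= J) :
  forall f, in_l2 f -> in_l2 (rhaly alpha f) /\ l2norm (rhaly alpha f) <= 2 * J * l2norm f.
Proof.
  intros f Hf.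
  assert (Hw : forall k, 0 <= w alpha k) by (intros; unfold w; apply pow2_ge_0).
  assert (HB : forall m d, INR (m + 1) * tsum (w alpha) m d <= J ^ 2).
  { intros m d. specialize (HJ m).
    assert (HT : tsum (w alpha) m d <= Tm alpha m).
    { destruct (shift_series (w alpha) m Hw Ha) as [E _].
      destruct d. simpl. apply Series_nonneg; auto; intros; apply Hw.
      rewrite tsum_sm. apply U2; auto; intros; apply Hw. }
    assert (0 <= Tm alpha m).
    { destruct (shift_series (w alpha) m Hw Ha) as [E _]. apply Series_nonneg; auto; intros; apply Hw. }
    rewrite <- sqrt_mult in HJ by (apply pos_INR || auto).
    assert (0 <= INR (m+1)) by apply pos_INR.
    assert (INR (m + 1) * Tm alpha m <= J ^ 2).
    { assert (0 <= sqrt (INR (m + 1) * Tm alpha m)) by apply sqrt_pos.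
      rewrite <- (sqrt_sqrt (INR (m + 1) * Tm alpha m)) by nra. nra. }
    nra. }
  set (a := fun j => Cmod (f j)).
  assert (Ha0 : forall j, 0 <= a j) by (intros; apply Cmod_ge_0).
  set (Q := Series (fun n => Cmod (f n) ^ 2)).
  assert (Hfin := finite_hardy (w alpha) a (J^2) Hw Ha0 HB).
  assert (Hterm : forall k, Cmod (rhaly alpha f k) ^ 2 <= w alpha k * (sm a k) ^ 2).
  { intros k. unfold rhaly, w. rewrite Cmod_mult.
    pose proof (psum_bound f k). pose proof (Cmod_ge_0 (psum f k)).
    fold a in H. rewrite Rpow_mult_distr. apply Rmult_le_compat_l. apply pow2_ge_0.
    apply pow_incr; lra. }
  destruct (U1 (fun k => Cmod (rhaly alpha f k) ^ 2) (4 * J^2 * Q)) as [E S].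
  - intros; apply pow2_ge_0.
  - intros N. eapply Rle_trans. apply sm_le. intros k _. apply Hterm.
    eapply Rle_trans. apply Hfin. apply Rmult_le_compat_l. pose proof (pow2_ge_0 J); lra.
    apply U2. intros; apply pow2_ge_0. exact Hf.
  - split. exact E. unfold l2norm. fold Q.
    assert (J0 : 0 <= J).
    { specialize (HJ O). pose proof (sqrt_pos (INR (0 + 1))). pose proof (sqrt_pos (Tm alpha 0)). nra. }
    eapply Rle_trans. apply sqrt_le_1_alt. exact S.
    assert (0 <= Q) by (apply Series_nonneg; auto; intros; apply pow2_ge_0).
    rewrite sqrt_mult by (pose proof (pow2_ge_0 J); nra).
    replace (4 * J ^ 2) with ((2 * J) ^ 2) by ring. rewrite sqrt_pow2 by lra. lra.
Qed.

Definition gm (m j : nat) : R := if (j <=? m)%nat then 1 else 0.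
Definition fm (m : nat) (j : nat) : C := RtoC (gm m j / sqrt (INR (m + 1))).

Lemma sm_gm m k : sm (gm m) k = INR (Nat.min k m + 1).
Proof.
  induction k; cbn [sm].
  - unfold gm. simpl. replace (Nat.min 0 m) with 0%nat by lia. simpl; lra.
  - rewrite IHk. unfold gm. destruct (Nat.leb_spec (S k) m).
    + replace (Nat.min (S k) m) with (S k) by lia. replace (Nat.min k m) with k by lia.
      rewrite !plus_INR, !S_INR. ring.
    + replace (Nat.min (S k) m) with m by lia. replace (Nat.min k m) with m by lia. ring.
Qed.

Lemma psum_fm m k : psum (fm m) k = RtoC (sm (gm m) k / sqrt (INR (m + 1))).
Proof.
  induction k; simpl. reflexivity. rewrite IHk. unfold fm. rewrite <- RtoC_plus. f_equal.
  unfold Rdiv. ring.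
Qed.

Lemma lower alpha (Ha : in_l2 alpha) m : exists f, in_l2 f /\ l2norm f = 1 /\
  in_l2 (rhaly alpha f) /\ sqrt (INR (m + 1)) * sqrt (Tm alpha m) <= l2norm (rhaly alpha f).
Proof.
  assert (Hw : forall k, 0 <= w alpha k) by (intros; unfold w; apply pow2_ge_0).
  set (s := sqrt (INR (m + 1))).
  assert (Hs : 0 < s) by apply s_pos.
  assert (Hs2 : s * s = INR (m + 1)) by (apply sqrt_sqrt, pos_INR).
  assert (Hm1 : 0 < INR (m + 1)) by nra.
  exists (fm m).
  assert (Hf : forall j, Cmod (fm m j) ^ 2 = gm m j / INR (m + 1)).
  { intros j. unfold fm. rewrite Cmod_R, pow2_abs. fold s. rewrite <- Hs2.
    unfold gm; destruct (j <=? m)%nat; field; lra. }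
  assert (Hg : forall j, 0 <= gm m j) by (intros; unfold gm; destruct (j <=? m)%nat; lra).
  assert (Hgn : forall N, sm (fun j => Cmod (fm m j) ^ 2) N = INR (Nat.min N m + 1) / INR (m + 1)).
  { intros N. rewrite (sm_ext _ (fun j => / INR (m + 1) * gm m j)).
    rewrite sm_scal, sm_gm. unfold Rdiv; ring. intros; rewrite Hf; unfold Rdiv; ring. }
  destruct (U1 (fun j => Cmod (fm m j) ^ 2) 1) as [E1 S1].
  { intros; apply pow2_ge_0. }
  { intros N. rewrite Hgn. apply (Rmult_le_reg_r (INR (m + 1))); auto.
    unfold Rdiv; rewrite Rmult_assoc, Rinv_l, Rmult_1_l, Rmult_1_r by lra. apply le_INR; lia. }
  assert (S2 : 1 <= Series (fun j => Cmod (fm m j) ^ 2)).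
  { eapply Rle_trans. 2: apply (U2 _ m); auto; intros; apply pow2_ge_0.
    rewrite Hgn. replace (Nat.min m m) with m by lia. right; field; lra. }
  split. exact E1. split. unfold l2norm. replace (Series _) with 1 by lra. apply sqrt_1.
  set (h := fun k => w alpha k * (INR (Nat.min k m + 1)) ^ 2 / INR (m + 1)).
  assert (Hh : forall k, Cmod (rhaly alpha (fm m) k) ^ 2 = h k).
  { intros k. unfold rhaly, h, w. rewrite Cmod_mult, psum_fm, Cmod_R, sm_gm.
    rewrite Rpow_mult_distr, pow2_abs. fold s. rewrite <- Hs2. field; lra. }
  assert (Hh0 : forall k, 0 <= h k).
  { intros k. rewrite <- Hh. apply pow2_ge_0. }
  assert (Hhle : forall k, h k <= INR (m + 1) * w alpha k).
  { intros k. unfold h. specialize (Hw k).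
    assert (0 <= INR (Nat.min k m + 1) <= INR (m + 1)) by (split; [apply pos_INR | apply le_INR; lia]).
    apply (Rmult_le_reg_r (INR (m + 1))); auto. unfold Rdiv.
    rewrite Rmult_assoc, Rinv_l, Rmult_1_r by lra. assert (INR (Nat.min k m + 1) ^ 2 <= INR (m + 1) ^ 2) by (apply pow_incr; lra). replace (INR (m + 1) * w alpha k * INR (m + 1)) with (w alpha k * INR (m + 1) ^ 2) by ring. apply Rmult_le_compat_l; auto. }
  destruct (U1 h (INR (m + 1) * Series (w alpha))) as [Eh _]; auto.
  { intros N. eapply Rle_trans. apply (sm_le _ (fun k => INR (m + 1) * w alpha k)). intros; auto.
    rewrite sm_scal. apply Rmult_le_compat_l. lra. apply U2; auto. }
  assert (ER : ex_series (fun k => Cmod (rhaly alpha (fm m) k) ^ 2)).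
  { destruct Eh as [l Hl]. exists l. eapply is_series_ext. 2: exact Hl. intros; now rewrite Hh. }
  split. exact ER.
  unfold l2norm. rewrite (Series_ext _ h) by exact Hh.
  destruct (shift_series (w alpha) m Hw Ha) as [Ew _].
  assert (0 <= Tm alpha m) by (apply (Series_nonneg (fun n => w alpha (n + m)%nat)); auto).
  unfold s; rewrite <- sqrt_mult by lra. apply sqrt_le_1_alt.
  destruct (shift_series h m Hh0 Eh) as [_ Sh].
  eapply Rle_trans. 2: exact Sh.
  unfold Tm. rewrite <- Series_scal_l. right. apply Series_ext. intros n.
  unfold h, w. replace (Nat.min (n + m) m) with m by lia. rewrite <- Hs2. field. lra.
Qed.

Theorem theorem2p3 (alpha : nat -> C) (Halpha : in_l2 alpha) :
  (rhaly_bounded alpha <-> J0 alpha <> p_infty) /\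
  (rhaly_bounded alpha ->
     Rbar_le (J0 alpha) (rhaly_norm alpha) /\
     Rbar_le (rhaly_norm alpha) (Rbar_mult (Finite (2 * sqrt 2)) (J0 alpha))).
Proof.
  set (EJ := fun x => exists m : nat,
    x = sqrt (INR (m + 1)) * sqrt (Series (fun n => (Cmod (alpha (n + m)%nat)) ^ 2))).
  set (EN := fun x => exists f, in_l2 f /\ l2norm f = 1 /\ x = l2norm (rhaly alpha f)).
  assert (LJ := Lub_Rbar_correct EJ). assert (LN := Lub_Rbar_correct EN).
  change (J0 alpha) with (Lub_Rbar EJ). change (rhaly_norm alpha) with (Lub_Rbar EN).
  destruct LJ as [ubJ leastJ]. destruct LN as [ubN leastN].
  assert (JleN : Rbar_le (Lub_Rbar EJ) (Lub_Rbar EN)).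
  { apply leastJ. intros x [m ->]. destruct (lower alpha Halpha m) as (f & Hf & Hn & _ & Hle).
    eapply Rbar_le_trans. 2: apply ubN. 2: exists f; split; [exact Hf | split; [exact Hn | reflexivity]].
    exact Hle. }
  assert (x0 : Rbar_le (Finite (sqrt (INR (0 + 1)) * sqrt (Tm alpha 0))) (Lub_Rbar EJ)).
  { apply ubJ. exists O. reflexivity. }
  assert (x0pos : 0 <= sqrt (INR (0 + 1)) * sqrt (Tm alpha 0)).
  { apply Rmult_le_pos; apply sqrt_pos. }
  assert (fin : Lub_Rbar EJ <> p_infty -> exists J, Lub_Rbar EJ = Finite J /\ 0 <= J /\
            forall m, sqrt (INR (m + 1)) * sqrt (Tm alpha m) <= J).
  { intros H. destruct (Lub_Rbar EJ) as [J| |] eqn:EQ.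
    - exists J. split; auto. split. eapply Rle_trans; [exact x0pos | exact x0].
      intros m. assert (Rbar_le (sqrt (INR (m + 1)) * sqrt (Tm alpha m)) (Finite J)).
      { apply ubJ. exists m. reflexivity. } exact H0.
    - now exfalso.
    - destruct x0. }
  assert (B2 : Lub_Rbar EJ <> p_infty -> rhaly_bounded alpha /\
     Rbar_le (Lub_Rbar EN) (Rbar_mult (Finite (2 * sqrt 2)) (Lub_Rbar EJ))).
  { intros H. destruct (fin H) as (J & EQ & J0 & HJ). rewrite EQ.
    pose proof (upper alpha Halpha J HJ) as U.
    split. exists (2 * J). exact U.
    apply leastN. intros x (f & Hf & Hn & ->). simpl.
    destruct (U f Hf) as [_ Hle]. rewrite Hn in Hle.
    assert (1 <= sqrt 2). { rewrite <- sqrt_1. apply sqrt_le_1_alt. lra. }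
    assert (2 * J <= 2 * sqrt 2 * J) by nra. lra. }
  split. split.
  - intros [M HM] H. rewrite H in JleN.
    assert (Rbar_le (Lub_Rbar EN) (Finite M)).
    { apply leastN. intros x (f & Hf & Hn & ->). destruct (HM f Hf) as [_ Hle].
      rewrite Hn in Hle. simpl. lra. }
    destruct (Lub_Rbar EN); simpl in *; auto.
  - intros H. apply B2; auto.
  - intros [M HM]. split. exact JleN.
    apply B2. intros H. rewrite H in JleN.
    assert (Rbar_le (Lub_Rbar EN) (Finite M)).
    { apply leastN. intros x (f & Hf & Hn & ->). destruct (HM f Hf) as [_ Hle].
      rewrite Hn in Hle. simpl. lra. }
    destruct (Lub_Rbar EN); simpl in *; auto.
Qed.
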